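(* Let $n\ge2$, let $0<f_1\le\dots\le f_n$ and $F_j=\sum_{i=1}^j f_i$. For $k\in\{1,\ldots,n-1\}$ let $X_k=1/(F_{n-k}+Z_k)^2$ where $Z_k\sim\Gamma\big(k,e\binom n2/k\big)$. Then for any $k\in\{1,\ldots,n-1\}$, $$\mathbb{E}[X_k]\le O\left(\frac{n^4F_{n-k}+kn^2}{n^4F_{n-k}^3+k^4F_{n-k}}\right).$$
   Context: $\Gamma(k,\lambda)$ denotes the distribution of the sum of $k$ independent exponential random variables with rate $\lambda$, i.e. density $\lambda^k x^{k-1}e^{-\lambda x}/(k-1)!$ on $x>0$. *)

(* Defs.v *)
From HB Require Import structures.
From mathcomp Require Import all_boot all_order all_algebra.
From mathcomp Require Import all_classical all_reals all_analysis.
Set Implicit Arguments. Unset Strict Implicit. Unset Printing Implicit Defensive.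
Import Order.TTheory GRing.Theory Num.Theory.
Local Open Scope ring_scope.
Local Open Scope classical_set_scope.

(* Density of Gamma(k, lam) (shape k, rate lam): sum of k i.i.d. Exp(lam). *)
Definition gamma_pdf {R : realType} (k : nat) (lam : R) (x : R) : R :=
  if 0 < x then lam ^+ k * x ^+ k.-1 * expR (- (lam * x)) / (k.-1)`!%:R else 0.

Definition gamma_expect {R : realType} (k : nat) (lam : R) (g : R -> R) : \bar R :=
  (\int[@lebesgue_measure R]_(x in [set: R]) (g x * gamma_pdf k lam x)%:E)%E.

Definition psum {R : realType} (f : nat -> R) (j : nat) : R :=
  \sum_(1 <= i < j.+1) f i.

(* Main.v *)
Require Import Defs.
From HB Require Import structures.
From mathcomp Require Import all_boot all_order all_algebra.
From mathcomp Require Import all_classical all_reals all_analysis.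
From mathcomp Require Import ring lra zify measurable_realfun.
Import Order.TTheory GRing.Theory Num.Theory.
Import numFieldNormedType.Exports.
Local Open Scope ring_scope.

Section S.
Context {R : realType}.
Local Open Scope classical_set_scope.

Fixpoint Ssum (j : nat) (y : R) : R :=
  match j with 0 => 0 | j'.+1 => Ssum j' y + y ^+ j' / (j'`!)%:R end.

Lemma mono_deriv (n : nat) (y : R) :
  is_derive y 1 (fun z : R => z ^+ n.+1 / (n.+1`!)%:R) (y ^+ n / (n`!)%:R).
Proof.
have -> : (fun z : R => z ^+ n.+1 / (n.+1`!)%:R) = ((n.+1`!)%:R^-1) \*: ((@id R) ^+ n.+1).
  apply: funext => z /=. by rewrite mulrC /GRing.scale /= exprfctE.
apply: (is_derive_eq (is_deriveZ _ (is_deriveX n.+1 (is_derive_id y 1)))).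
rewrite /= factS natrM invfM /GRing.scale /= mulr1.
field; rewrite pnatr_eq0 -lt0n fact_gt0 /= addrC natr1 pnatr_eq0 //.
Qed.

Lemma Ssum_deriv j (y : R) : is_derive y 1 (Ssum j.+1) (Ssum j y).
Proof.
elim: j y => [|j IH] y.
  have -> : Ssum 1 = cst 1 by apply: funext => z; rewrite /= add0r expr0 fact0 divr1.
  exact: is_derive_cst.
have -> : Ssum j.+2 = Ssum j.+1 + (fun z : R => z ^+ j.+1 / (j.+1`!)%:R) by apply: funext.
exact: (is_derive_eq (is_deriveD (IH y) (mono_deriv j y))).
Qed.

Definition hpdf (j : nat) (l x : R) : R :=
  l ^+ j * x ^+ j.-1 * expR (- (l * x)) / (j.-1)`!%:R.

Definition Gant (j : nat) (l x : R) : R := - (expR (- (l * x)) * Ssum j (l * x)).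

Lemma lin_deriv (l x : R) : is_derive x 1 (fun z : R => - (l * z)) (- l).
Proof.
have -> : (fun z : R => - (l * z)) = (- l) \*: (@id R).
  by apply: funext => z /=; rewrite /GRing.scale /= mulNr.
apply: (is_derive_eq (is_deriveZ _ (is_derive_id x 1))); by rewrite /GRing.scale /= mulr1.
Qed.

Lemma lin_deriv' (l x : R) : is_derive x 1 (fun z : R => l * z) l.
Proof.
have -> : (fun z : R => l * z) = l \*: (@id R).
  by apply: funext => z /=.
apply: (is_derive_eq (is_deriveZ _ (is_derive_id x 1))); by rewrite /GRing.scale /= mulr1.
Qed.

Lemma Gant_deriv m (l x : R) : is_derive x 1 (Gant m.+1 l) (hpdf m.+1 l x).
Proof.
have E1 : is_derive x 1 (fun z => expR (- (l * z))) (expR (- (l * x)) * - l).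
  exact: (@is_derive1_comp _ expR (fun z => - (l * z)) x _ _ (is_derive_expR _) (lin_deriv l x)).
have E2 : is_derive x 1 (fun z => Ssum m.+1 (l * z)) (Ssum m (l * x) * l).
  exact: (@is_derive1_comp _ (Ssum m.+1) (fun z => l * z) x _ _ (Ssum_deriv m _) (lin_deriv' l x)).
have -> : Gant m.+1 l = - ((fun z => expR (- (l * z))) * (fun z => Ssum m.+1 (l * z))).
  by apply: funext => z.
apply: (is_derive_eq (is_deriveN (is_deriveM E1 E2))).
rewrite /hpdf /= /GRing.scale /=.
set e := expR _; set s := Ssum m _.
rewrite exprMn exprS.
field; rewrite pnatr_eq0 -lt0n fact_gt0 //.
Qed.

Lemma decay (g : R -> R) c : 0 <= c -> (forall x, 0 < x -> 0 <= g x <= c / x) ->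
  g x @[x --> +oo] --> 0.
Proof.
move=> c0 gb; apply/cvgr0Pnorm_lt => e e0.
near=> x.
have x0 : 0 < x.
  apply: (@lt_le_trans _ _ ((c + 1) / e)); first by apply: divr_gt0 => //; lra.
  by apply: ltW; near: x; apply: nbhs_pinfty_gt; rewrite num_real.
have /andP[g0 gc] := gb x x0.
rewrite ger0_norm //; apply: (le_lt_trans gc).
have xb : (c + 1) / e < x by near: x; apply: nbhs_pinfty_gt; rewrite num_real.
rewrite ltr_pdivrMr // ; rewrite ltr_pdivrMr // in xb.
by rewrite mulrC; lra.
Unshelve. all: by end_near.
Qed.

Lemma term_bound j (y : R) : 0 < y -> expR (- y) * (y ^+ j / j`!%:R) <= j.+1%:R / y.
Proof.
move=> y0.
have h := expR_ge1Dxn j (ltW y0).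
have f0 : 0 < j`!%:R :> R by rewrite ltr0n fact_gt0.
have f1 : 0 < (j.+1)`!%:R :> R by rewrite ltr0n fact_gt0.
have E : y ^+ j / j`!%:R = (y ^+ j.+1 / (j.+1)`!%:R) * (j.+1%:R / y).
  rewrite factS natrM exprS; field.
  by rewrite gt_eqF //= gt_eqF //= addrC natr1 pnatr_eq0.
rewrite E mulrA expRN.
apply: ler_piMl; first by apply: divr_ge0 => //; apply: ltW.
rewrite mulrC ler_pdivrMr ?expR_gt0 // mul1r; lra.
Qed.

Lemma Gant_cvg j (l : R) : 0 < l -> Gant j l x @[x --> +oo] --> 0.
Proof.
move=> l0; elim: j => [|j IH].
  have -> : Gant 0 l = cst 0 by apply: funext => x; rewrite /Gant /= mulr0 oppr0.
  exact: cvg_cst.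
have -> : Gant j.+1 l = Gant j l - (fun x => expR (- (l * x)) * ((l * x) ^+ j / j`!%:R)).
  by apply: funext => x; rewrite /Gant /= !fctE mulrDr opprD.
rewrite -[0]subr0; apply: cvgB => //.
apply: (@decay _ (j.+1%:R / l)); first by apply: divr_ge0 => //; apply: ltW.
move=> x x0; apply/andP; split.
  by apply: mulr_ge0; [apply: expR_ge0|apply: divr_ge0; [apply: exprn_ge0; apply: mulr_ge0; apply: ltW|apply: ler0n]].
have := @term_bound j (l * x) (mulr_gt0 l0 x0); rewrite invfM.
by rewrite !mulrA.
Qed.
Lemma contXn (f : R -> R) (x : R) n : {for x, continuous f} -> {for x, continuous (fun z => f z ^+ n)}.
Proof. move=> cf; exact: (continuous_comp cf (@exprn_continuous R n (f x))). Qed.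

Lemma cont_exp (l : R) : continuous (fun x : R => expR (- (l * x))).
Proof.
move=> x; apply: continuous_comp; last exact: continuous_expR.
apply: cvgN; apply: cvgM; [exact: cvg_cst| exact: cvg_id].
Qed.

Lemma cont_hpdf j (l : R) : continuous (hpdf j l).
Proof.
move=> x; rewrite /hpdf.
apply: cvgM; last exact: cvg_cst.
apply: cvgM; last exact: cont_exp.
apply: cvgM; first exact: cvg_cst.
exact: (@contXn id x _ cvg_id).
Qed.

Lemma cont_inv2 (F x : R) : F + x != 0 -> {for x, continuous (fun z : R => 1 / (F + z) ^+ 2)}.
Proof.
move=> h.
apply: cvgM; first exact: cvg_cst.
apply: cvgV; first by rewrite expf_eq0.
apply: (@contXn (fun z => F + z)); apply: cvgD; [exact: cvg_cst| exact: cvg_id].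
Qed.

Lemma Ssum0 m : Ssum m.+1 (0 : R) = 1.
Proof.
elim: m => [|m IH]; first by rewrite /= add0r expr0 fact0 divr1.
by rewrite /= in IH *; rewrite IH expr0n /= mul0r addr0.
Qed.

Lemma Gant_cont m (l x : R) : {for x, continuous (Gant m.+1 l)}.
Proof.
apply: differentiable_continuous; apply/derivable1_diffP.
by case: (Gant_deriv m l x).
Qed.

Lemma int_hpdf m (l : R) : 0 < l ->
  (\int[lebesgue_measure]_(x in `]0%R, +oo[) (hpdf m.+1 l x)%:E = 1)%E.
Proof.
move=> l0.
rewrite (@integral_itv_obnd_cbnd R 0 (BInfty _ false) (EFin \o hpdf m.+1 l)); last first.
  apply/measurable_EFinP; apply: measurable_funTS; apply: continuous_measurable_fun.
  exact: cont_hpdf.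
rewrite (@ge0_continuous_FTC2y R (hpdf m.+1 l) (Gant m.+1 l) 0 0).
- rewrite /Gant mulr0 oppr0 expR0 mul1r Ssum0 -EFinB sub0r opprK //.
- move=> x x0; rewrite /hpdf; apply: divr_ge0 => //; apply: mulr_ge0; last exact: expR_ge0.
  by apply: mulr_ge0; apply: exprn_ge0 => //; apply: ltW.
- apply: continuous_subspaceT; exact: cont_hpdf.
- exact: Gant_cvg.
- by move=> x _; case: (Gant_deriv m l x).
- by apply: cvg_at_right_filter; exact: Gant_cont.
- by move=> x _; rewrite derive1E; case: (Gant_deriv m l x).
Qed.

Lemma Ginv_deriv (F x : R) : F + x != 0 ->
  is_derive x 1 (fun z : R => - (F + z)^-1) (1 / (F + x) ^+ 2).
Proof.
move=> h.
have D1 : is_derive x 1 (fun z : R => F + z) 1.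
  have -> : (fun z : R => F + z) = cst F + (@id R) by apply: funext.
  by apply: (is_derive_eq (is_deriveD (is_derive_cst F x 1) (is_derive_id x 1))); rewrite add0r.
apply: (is_derive_eq (is_deriveN (is_deriveV h D1))).
by rewrite /GRing.scale /= mulr1 opprK mul1r.
Qed.

Lemma Ginv_cont (F x : R) : F + x != 0 -> {for x, continuous (fun z : R => - (F + z)^-1)}.
Proof.
move=> h; apply: differentiable_continuous; apply/derivable1_diffP.
by case: (@Ginv_deriv F x h).
Qed.

Lemma int_inv2 (F : R) : 0 < F ->
  (\int[lebesgue_measure]_(x in `]0%R, +oo[) (1 / (F + x) ^+ 2)%:E = (F^-1)%:E)%E.
Proof.
move=> F0.
have cf : {in `[0%R, +oo[, continuous (fun z : R => 1 / (F + z) ^+ 2)}.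
  move=> x; rewrite inE /= in_itv /= andbT => x0; apply: cont_inv2; rewrite gt_eqF //; lra.
rewrite (@integral_itv_obnd_cbnd R 0 (BInfty _ false) (fun z : R => (1 / (F + z) ^+ 2)%:E)); last first.
  apply/(measurable_EFinP _ (fun z : R => 1 / (F + z) ^+ 2)); apply: open_continuous_measurable_fun; first exact: interval_open.
  move=> x; rewrite inE /= in_itv /= andbT => x0; apply: cf; rewrite inE /= in_itv /= andbT; exact: ltW.
rewrite (@ge0_continuous_FTC2y R (fun z : R => 1 / (F + z) ^+ 2) (fun z : R => - (F + z)^-1) 0 0).
- by rewrite addr0 -EFinB sub0r opprK.
- by move=> x x0; apply: divr_ge0 => //; apply: exprn_ge0; lra.
- exact: continuous_in_subspaceT cf.
- rewrite -oppr0; apply: cvgN; apply: (@decay _ 1) => // x x0.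
  rewrite invr_ge0 mul1r; apply/andP; split; first lra.
  rewrite lef_pV2 ?posrE //; lra.
- move=> x x0; have : F + x != 0 by rewrite gt_eqF //; lra.
  by move=> /(@Ginv_deriv F x); case.
- apply: cvg_at_right_filter; apply: Ginv_cont; by rewrite addr0 gt_eqF.
- move=> x; rewrite in_itv /= andbT => x0; rewrite derive1E.
  have : F + x != 0 by rewrite gt_eqF //; lra.
  by move=> /(@Ginv_deriv F x); case.
Qed.

Local Notation mu := (@lebesgue_measure R).

Lemma to_pos (g : R -> R) j (l : R) :
  (\int[mu]_(x in [set: R]) (g x * gamma_pdf j l x)%:E =
   \int[mu]_(x in `]0%R, +oo[) (g x * hpdf j l x)%:E)%E.
Proof.
rewrite [RHS]integral_mkcond; apply: eq_integral => x _.
have E : (x \in `]0%R, +oo[) = (0 < x) by apply/idP/idP; rewrite in_setE /= in_itv /= andbT.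
rewrite /patch /gamma_pdf E.
by case: ifP => _ //; rewrite mulr0.
Qed.

Lemma int_le_c (f1 f2 : R -> R) (c : R) : 0 <= c ->
  {in `]0%R, +oo[, continuous f1} -> {in `]0%R, +oo[, continuous f2} ->
  (forall x, 0 < x -> 0 <= f1 x) -> (forall x, 0 < x -> 0 <= f2 x) ->
  (forall x, 0 < x -> f1 x <= c * f2 x) ->
  (\int[mu]_(x in `]0%R, +oo[) (f1 x)%:E <= c%:E * \int[mu]_(x in `]0%R, +oo[) (f2 x)%:E)%E.
Proof.
move=> c0 cf1 cf2 f10 f20 f12.
have m1 : measurable_fun (`]0%R, +oo[ : set R) f1.
  by apply: open_continuous_measurable_fun => //; exact: interval_open.
have m2 : measurable_fun (`]0%R, +oo[ : set R) f2.
  by apply: open_continuous_measurable_fun => //; exact: interval_open.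
have mD : measurable (`]0%R, +oo[ : set R) by exact: measurable_itv.
have F20 : forall x, (`]0%R, +oo[ : set R) x -> (0 <= (f2 x)%:E)%E.
  by move=> x /=; rewrite in_itv /= andbT => x0; rewrite lee_fin f20.
have M2 : measurable_fun (`]0%R, +oo[ : set R) (fun x => (f2 x)%:E).
  exact/measurable_EFinP.
rewrite -(@ge0_integralZl_EFin _ _ _ mu _ mD (fun x => (f2 x)%:E) F20 M2 c c0).
apply: ge0_le_integral => //.
- by move=> x /=; rewrite in_itv /= andbT => x0; rewrite lee_fin f10.
- exact/measurable_EFinP.
- by apply/measurable_EFinP; apply: measurable_funM => //; exact: measurable_cst.
- by move=> x /=; rewrite in_itv /= andbT => x0; rewrite lee_fin f12.
Qed.

Lemma hpdf_ge0 j (l x : R) : 0 <= l -> 0 <= x -> 0 <= hpdf j l x.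
Proof.
move=> l0 x0; rewrite /hpdf; apply: divr_ge0 => //; apply: mulr_ge0; last exact: expR_ge0.
by apply: mulr_ge0; apply: exprn_ge0.
Qed.

Lemma inv2_ge0 (F x : R) : 0 < F -> 0 < x -> 0 <= 1 / (F + x) ^+ 2.
Proof. by move=> F0 x0; apply: divr_ge0 => //; apply: exprn_ge0; lra. Qed.

Lemma cont_prod (F : R) j l : 0 < F ->
  {in `]0%R, +oo[, continuous (fun x => 1 / (F + x) ^+ 2 * hpdf j l x)}.
Proof.
move=> F0 x; rewrite inE /= in_itv /= andbT => x0.
apply: cvgM; last exact: cont_hpdf.
by apply: cont_inv2; rewrite gt_eqF //; lra.
Qed.

Lemma contD (g : R -> R) : continuous g -> {in `]0%R, +oo[, continuous g}.
Proof. by move=> cg x _; exact: cg. Qed.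

Lemma boundA m (l F : R) : 0 < l -> 0 < F ->
  (gamma_expect m.+1 l (fun z => (1 / (F + z) ^+ 2)%R) <= (1 / F ^+ 2)%:E)%E.
Proof.
move=> l0 F0; rewrite /gamma_expect to_pos.
apply: le_trans.
  apply: (@int_le_c _ (hpdf m.+1 l) (1 / F ^+ 2)).
  - by apply: divr_ge0 => //; apply: exprn_ge0; apply: ltW.
  - exact: cont_prod.
  - exact: contD (cont_hpdf _ _).
  - by move=> x x0; apply: mulr_ge0; [apply: inv2_ge0|apply: hpdf_ge0; apply: ltW].
  - by move=> x x0; apply: hpdf_ge0; apply: ltW.
  - move=> x x0; apply: ler_wpM2r; first by apply: hpdf_ge0; apply: ltW.
    rewrite !mul1r lef_pV2 ?posrE ?exprn_gt0 //; last lra.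
    rewrite ler_pXn2r // ?nnegrE; lra.
by rewrite (@int_hpdf m l l0) mule1.
Qed.

Lemma boundB m (l F : R) : 0 < l -> 0 < F ->
  (gamma_expect m.+3 l (fun z => (1 / (F + z) ^+ 2)%R)
     <= (l ^+ 2 / ((m.+2)%:R * (m.+1)%:R))%:E)%E.
Proof.
move=> l0 F0; rewrite /gamma_expect to_pos.
set c := l ^+ 2 / ((m.+2)%:R * (m.+1)%:R).
have c0 : 0 <= c by apply: divr_ge0; [apply: exprn_ge0; apply: ltW| apply: mulr_ge0; apply: ler0n].
apply: le_trans.
  apply: (@int_le_c _ (hpdf m.+1 l) c) => //.
  - exact: cont_prod.
  - exact: contD (cont_hpdf _ _).
  - by move=> x x0; apply: mulr_ge0; [apply: inv2_ge0|apply: hpdf_ge0; apply: ltW].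
  - by move=> x x0; apply: hpdf_ge0; apply: ltW.
  - move=> x x0.
    have E : hpdf m.+3 l x = x ^+ 2 * (c * hpdf m.+1 l x).
      rewrite /hpdf /c /= !factS !natrM -[l ^+ m.+3]/(l ^+ (2 + m.+1)) -[x ^+ m.+2]/(x ^+ (2 + m)) !exprD; field.
      have h1 := ler0n R m; have h2 : 0 < m`!%:R :> R by rewrite ltr0n fact_gt0.
      by apply/and3P; split; apply: lt0r_neq0 => //; lra.
    rewrite E mulrA.
    have h0 : 0 <= c * hpdf m.+1 l x by apply: mulr_ge0 => //; apply: hpdf_ge0; apply: ltW.
    apply: ler_piMl => //.
    rewrite mul1r mulrC -/(_ / _) ler_pdivrMr ?exprn_gt0 //; last lra.
    by rewrite mul1r ler_pXn2r // ?nnegrE; lra.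
by rewrite (@int_hpdf m l l0) mule1.
Qed.

Lemma boundC2 (l F : R) : 0 < l -> 0 < F ->
  (gamma_expect 2 l (fun z => (1 / (F + z) ^+ 2)%R) <= (l / F)%:E)%E.
Proof.
move=> l0 F0; rewrite /gamma_expect to_pos.
apply: le_trans.
  apply: (@int_le_c _ (hpdf 1 l) (l / F)).
  - by apply: divr_ge0; apply: ltW.
  - exact: cont_prod.
  - exact: contD (cont_hpdf _ _).
  - by move=> x x0; apply: mulr_ge0; [apply: inv2_ge0|apply: hpdf_ge0; apply: ltW].
  - by move=> x x0; apply: hpdf_ge0; apply: ltW.
  - move=> x x0.
    have E : hpdf 2 l x = (x * l) * hpdf 1 l x.
      by rewrite /hpdf /= !fact0 !divr1 expr1 expr0 mulr1; ring.
    have h0 : 0 <= hpdf 1 l x by apply: hpdf_ge0; apply: ltW.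
    rewrite E mulrA; apply: ler_wpM2r => //.
    have -> : 1 / (F + x) ^+ 2 * (x * l) = (x * l) / (F + x) ^+ 2 by rewrite mul1r mulrC.
    have p2 : 0 < (F + x) ^+ 2 by apply: exprn_gt0; lra.
    rewrite ler_pdivrMr // mulrAC ler_pdivlMr //.
    have -> : l * (F + x) ^+ 2 = l * (F ^+ 2 + x ^+ 2) + x * l * F * 2 by ring.
    have : 0 <= l * (F ^+ 2 + x ^+ 2) by apply: mulr_ge0; [lra| apply: addr_ge0; apply: sqr_ge0].
    have : 0 <= x * l * F by apply: mulr_ge0; [apply: mulr_ge0|]; lra.
    lra.
by rewrite (@int_hpdf 0 l l0) mule1.
Qed.

Lemma boundC1 (l F : R) : 0 < l -> 0 < F ->
  (gamma_expect 1 l (fun z => (1 / (F + z) ^+ 2)%R) <= (l / F)%:E)%E.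
Proof.
move=> l0 F0; rewrite /gamma_expect to_pos.
apply: le_trans.
  apply: (@int_le_c _ (fun x => 1 / (F + x) ^+ 2) l).
  - exact: ltW.
  - exact: cont_prod.
  - move=> x; rewrite inE /= in_itv /= andbT => x0; apply: cont_inv2; rewrite gt_eqF //; lra.
  - by move=> x x0; apply: mulr_ge0; [apply: inv2_ge0|apply: hpdf_ge0; apply: ltW].
  - by move=> x x0; apply: inv2_ge0.
  - move=> x x0; rewrite mulrC; apply: ler_wpM2r; first exact: inv2_ge0.
    rewrite /hpdf /= fact0 divr1 expr0 mulr1 expr1.
    apply: ler_piMr; first exact: ltW.
    by rewrite expR_le1 oppr_le0; apply: mulr_ge0; apply: ltW.
by rewrite (@int_inv2 F F0).
Qed.
End S.

Section A.
Context {R : realFieldType}.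

Lemma arithA (C N K F : R) : 0 < F -> 0 < K -> 0 < N -> K ^+ 2 <= N ^+ 2 * F -> 2 <= C ->
  1 / F ^+ 2 <= C * ((N ^+ 4 * F + K * N ^+ 2) / (N ^+ 4 * F ^+ 3 + K ^+ 4 * F)).
Proof.
move=> F0 K0 N0 h C2.
have b0 : 0 < N ^+ 4 * F ^+ 3 + K ^+ 4 * F.
  by apply: addr_gt0; apply: mulr_gt0 => //; apply: exprn_gt0.
rewrite ler_pdivrMr ?exprn_gt0 // mulrA mulrAC ler_pdivlMr // mul1r.
have h4 : K ^+ 4 <= N ^+ 4 * F ^+ 2.
  have -> : K ^+ 4 = (K ^+ 2) ^+ 2 by rewrite -exprM.
  have -> : N ^+ 4 * F ^+ 2 = (N ^+ 2 * F) ^+ 2 by rewrite exprMn -exprM.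
  by rewrite ler_pXn2r // ?nnegrE; [apply: exprn_ge0; apply: ltW| apply: ltW; apply: mulr_gt0 => //; apply: exprn_gt0].
have p1 : K ^+ 4 * F <= N ^+ 4 * F ^+ 3.
  have -> : N ^+ 4 * F ^+ 3 = (N ^+ 4 * F ^+ 2) * F by ring.
  by apply: ler_wpM2r => //; apply: ltW.
have p2 : 0 <= C * (K * N ^+ 2) * F ^+ 2.
  apply: mulr_ge0; last by apply: exprn_ge0; apply: ltW.
  apply: mulr_ge0; first lra.
  by apply: mulr_ge0; [apply: ltW | apply: exprn_ge0; apply: ltW].
have p3 : 2 * (N ^+ 4 * F ^+ 3) <= C * (N ^+ 4 * F ^+ 3).
  by apply: ler_wpM2r => //; apply: mulr_ge0; apply: exprn_ge0; apply: ltW.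
have E : C * (N ^+ 4 * F + K * N ^+ 2) * F ^+ 2 = C * (N ^+ 4 * F ^+ 3) + C * (K * N ^+ 2) * F ^+ 2.
  ring.
rewrite E; lra.
Qed.

Lemma cross (x y z w : R) : 0 < y -> 0 < w -> x * w <= z * y -> x / y <= z / w.
Proof.
move=> y0 w0 h; rewrite ler_pdivrMr // mulrAC ler_pdivlMr //.
Qed.

Lemma lowB (N K F : R) : 0 < F -> 0 < K -> 0 < N -> N ^+ 2 * F <= K ^+ 2 ->
  N ^+ 4 / (2 * K ^+ 4) <= (N ^+ 4 * F + K * N ^+ 2) / (N ^+ 4 * F ^+ 3 + K ^+ 4 * F).
Proof.
move=> F0 K0 N0 h.
have n4 := exprn_gt0 4 N0; have k4 := exprn_gt0 4 K0; have f3 := exprn_gt0 3 F0.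
have n2 := exprn_gt0 2 N0.
apply: cross; first by apply: mulr_gt0.
  by apply: addr_gt0; apply: mulr_gt0.
have h4 : N ^+ 4 * F ^+ 2 <= K ^+ 4.
  have -> : K ^+ 4 = (K ^+ 2) ^+ 2 by rewrite -exprM.
  have -> : N ^+ 4 * F ^+ 2 = (N ^+ 2 * F) ^+ 2 by rewrite exprMn -exprM.
  by rewrite ler_pXn2r // ?nnegrE; [apply: ltW; apply: mulr_gt0| apply: exprn_ge0; apply: ltW].
have p1 : N ^+ 4 * F * (N ^+ 4 * F ^+ 2) <= N ^+ 4 * F * K ^+ 4.
  by apply: ler_wpM2l => //; apply: ltW; apply: mulr_gt0.
have p2 : 0 <= K * N ^+ 2 * (2 * K ^+ 4).
  by apply: mulr_ge0; [apply: ltW; apply: mulr_gt0|apply: ltW; apply: mulr_gt0].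
have -> : N ^+ 4 * (N ^+ 4 * F ^+ 3 + K ^+ 4 * F) = N ^+ 4 * F * (N ^+ 4 * F ^+ 2) + N ^+ 4 * F * K ^+ 4 by ring.
have -> : (N ^+ 4 * F + K * N ^+ 2) * (2 * K ^+ 4) = 2 * (N ^+ 4 * F * K ^+ 4) + K * N ^+ 2 * (2 * K ^+ 4) by ring.
have p3 : 0 <= N ^+ 4 * F * K ^+ 4 by apply: ltW; do 2 apply: mulr_gt0 => //.
lra.
Qed.

Lemma lowC (N K F : R) : 0 < F -> 0 < K -> 0 < N -> N ^+ 2 * F <= K ^+ 2 ->
  N ^+ 2 / (2 * K ^+ 3 * F) <= (N ^+ 4 * F + K * N ^+ 2) / (N ^+ 4 * F ^+ 3 + K ^+ 4 * F).
Proof.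
move=> F0 K0 N0 h.
have n4 := exprn_gt0 4 N0; have k4 := exprn_gt0 4 K0; have f3 := exprn_gt0 3 F0.
have n2 := exprn_gt0 2 N0; have k3 := exprn_gt0 3 K0; have f2 := exprn_gt0 2 F0.
apply: cross; first by do 2 apply: mulr_gt0 => //.
  by apply: addr_gt0; apply: mulr_gt0.
have h4 : N ^+ 4 * F ^+ 2 <= K ^+ 4.
  have -> : K ^+ 4 = (K ^+ 2) ^+ 2 by rewrite -exprM.
  have -> : N ^+ 4 * F ^+ 2 = (N ^+ 2 * F) ^+ 2 by rewrite exprMn -exprM.
  by rewrite ler_pXn2r // ?nnegrE; [apply: ltW; apply: mulr_gt0| apply: exprn_ge0; apply: ltW].
have p1 : N ^+ 2 * F * (N ^+ 4 * F ^+ 2) <= N ^+ 2 * F * K ^+ 4.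
  by apply: ler_wpM2l => //; apply: ltW; apply: mulr_gt0.
have -> : N ^+ 2 * (N ^+ 4 * F ^+ 3 + K ^+ 4 * F) = N ^+ 2 * F * (N ^+ 4 * F ^+ 2) + N ^+ 2 * F * K ^+ 4 by ring.
have -> : (N ^+ 4 * F + K * N ^+ 2) * (2 * K ^+ 3 * F) = 2 * (N ^+ 4 * F ^+ 2 * K ^+ 3) + 2 * (N ^+ 2 * F * K ^+ 4) by ring.
have p3 : 0 <= N ^+ 2 * F * K ^+ 4 by apply: ltW; do 2 apply: mulr_gt0 => //.
have p4 : 0 <= N ^+ 4 * F ^+ 2 * K ^+ 3 by apply: ltW; do 2 apply: mulr_gt0 => //.
lra.
Qed.

Lemma arithB (C E N K l Q : R) : 0 < K -> 0 < N -> 0 < l -> 0 < Q -> K ^+ 2 <= 6 * Q ->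
  2 * K * l <= E * N ^+ 2 -> 3 * E ^+ 2 <= C -> 0 <= E ->
  l ^+ 2 / Q <= C * (N ^+ 4 / (2 * K ^+ 4)).
Proof.
move=> K0 N0 l0 Q0 hQ hl hC E0.
have k4 := exprn_gt0 4 K0; have n4 := exprn_gt0 4 N0; have k2 := exprn_gt0 2 K0.
rewrite mulrA; apply: cross => //; first by apply: mulr_gt0.
have a0 : 0 <= 2 * K * l by apply: ltW; apply: mulr_gt0 => //; apply: mulr_gt0.
have b0 : 0 <= E * N ^+ 2 by apply: mulr_ge0 => //; apply: exprn_ge0; apply: ltW.
have s1 : (2 * K * l) ^+ 2 <= (E * N ^+ 2) ^+ 2.
  by rewrite ler_pXn2r ?nnegrE.
have e1 : l ^+ 2 * (2 * K ^+ 4) = (2 * K * l) ^+ 2 * (K ^+ 2 / 2) by field.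
have s2 : (2 * K * l) ^+ 2 * (K ^+ 2 / 2) <= (E * N ^+ 2) ^+ 2 * (K ^+ 2 / 2).
  by apply: ler_wpM2r => //; apply: divr_ge0 => //; apply: ltW.
have s3 : (E * N ^+ 2) ^+ 2 * (K ^+ 2 / 2) <= (E * N ^+ 2) ^+ 2 * (3 * Q).
  have q : K ^+ 2 / 2 <= 3 * Q by lra.
  have e2 : 0 <= (E * N ^+ 2) ^+ 2 by apply: exprn_ge0.
  exact: (ler_wpM2l e2 q).
have s4 : (E * N ^+ 2) ^+ 2 * (3 * Q) = (3 * E ^+ 2) * (N ^+ 4 * Q).
  by rewrite exprMn -exprM; ring.
have s5 : (3 * E ^+ 2) * (N ^+ 4 * Q) <= C * (N ^+ 4 * Q).
  by apply: ler_wpM2r => //; apply: ltW; apply: mulr_gt0.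
rewrite e1 -mulrA; lra.
Qed.

Lemma arithC (C E N K l F : R) : 0 < K -> K <= 2 -> 0 < N -> 0 < l -> 0 < F ->
  2 * K * l <= E * N ^+ 2 -> 4 * E <= C -> 0 <= E ->
  l / F <= C * (N ^+ 2 / (2 * K ^+ 3 * F)).
Proof.
move=> K0 K2 N0 l0 F0 hl hC E0.
have k3 := exprn_gt0 3 K0; have n2 := exprn_gt0 2 N0; have k2 := exprn_gt0 2 K0.
rewrite mulrA; apply: cross => //; first by do 2 apply: mulr_gt0 => //.
have e1 : l * (2 * K ^+ 3 * F) = (2 * K * l) * (K ^+ 2 * F) by ring.
have s1 : (2 * K * l) * (K ^+ 2 * F) <= (E * N ^+ 2) * (K ^+ 2 * F).
  by apply: ler_wpM2r => //; apply: ltW; apply: mulr_gt0.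
have s2 : K ^+ 2 <= 4.
  have -> : (4 : R) = 2 ^+ 2 by rewrite expr2; lra.
  rewrite ler_pXn2r // ?nnegrE; lra.
have s3 : (E * N ^+ 2) * (K ^+ 2 * F) <= (E * N ^+ 2) * (4 * F).
  apply: ler_wpM2l; first by apply: mulr_ge0 => //; apply: ltW.
  by apply: ler_wpM2r => //; apply: ltW.
have s4 : (E * N ^+ 2) * (4 * F) = (4 * E) * (N ^+ 2 * F) by ring.
have s5 : (4 * E) * (N ^+ 2 * F) <= C * (N ^+ 2 * F).
  by apply: ler_wpM2r => //; apply: ltW; apply: mulr_gt0.
rewrite e1 -mulrA; lra.
Qed.
End A.

Lemma fpos (R : realType) (n : nat) (f : nat -> R) : 0 < f 1%N ->
  (forall i : nat, (1 <= i)%N -> (i < n)%N -> f i <= f i.+1) ->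
  forall i, (1 <= i)%N -> (i <= n)%N -> 0 < f i.
Proof.
move=> f1 fm; elim=> [//|i IH] _ hin.
case: i IH hin => [|i] IH hin; first by [].
apply: (lt_le_trans (IH isT (ltnW hin))); exact: fm.
Qed.

Lemma psum_pos (R : realType) (f : nat -> R) j : (1 <= j)%N ->
  (forall i, (1 <= i)%N -> (i <= j)%N -> 0 < f i) -> 0 < psum f j.
Proof.
move=> j1 fp; rewrite /psum big_ltn ?ltnS //.
apply: (@lt_le_trans _ _ (f 1%N)); first exact: fp.
rewrite lerDl.
rewrite big_nat_cond; apply: sumr_ge0 => i /andP[/andP[hi1 hi2] _]; apply: ltW; apply: fp; first by apply: ltnW.
by rewrite -ltnS.
Qed.

Lemma bin2_le (n : nat) : (2 * 'C(n, 2) <= n * n)%N.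
Proof.
rewrite bin2 mul2n.
have h := odd_double_half (n * n.-1).
apply: (@leq_trans (n * n.-1)); first by rewrite -[X in (_ <= X)%N]h leq_addl.
by apply: leq_mul => //; apply: leq_pred.
Qed.

Lemma sq_le m : (m.+3 ^ 2 <= 6 * (m.+2 * m.+1))%N.
Proof. nia. Qed.

Theorem lemma14 (R : realType) :
  exists C : R, 0 < C /\
  forall (n : nat) (f : nat -> R),
    (2 <= n)%N ->
    0 < f 1%N ->
    (forall i : nat, (1 <= i)%N -> (i < n)%N -> f i <= f i.+1) ->
    forall k : nat, (1 <= k)%N -> (k <= n - 1)%N ->
      let F := psum f (n - k) in
      let lam := expR 1 * ('C(n, 2))%:R / k%:R in
      (gamma_expect k lam (fun z => (1 / (F + z) ^+ 2)%R)
        <= (C * ((n%:R ^+ 4 * F + k%:R * n%:R ^+ 2)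
                 / (n%:R ^+ 4 * F ^+ 3 + k%:R ^+ 4 * F)))%R%:E)%E.
Proof.
set E : R := expR 1.
have E0 : 0 < E by apply: expR_gt0.
have E2 : 0 <= E ^+ 2 by apply: sqr_ge0.
exists (4 + 8 * E + 4 * E ^+ 2); split; first lra.
set C := 4 + 8 * E + 4 * E ^+ 2.
have C0 : 0 <= C by rewrite /C; lra.
have C2 : 2 <= C by rewrite /C; lra.
have C3 : 3 * E ^+ 2 <= C by rewrite /C; lra.
have C4 : 4 * E <= C by rewrite /C; lra.
move=> n f n2 f1 fm k k1 kn; cbv zeta.
set F := psum f (n - k).
set lam := E * _ / _.
have F0 : 0 < F.
  apply: psum_pos; first lia.
  move=> i i1 hi; apply: (@fpos R n f f1 fm i i1); lia.
set N : R := n%:R; set K : R := k%:R.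
have N0 : 0 < N by rewrite /N ltr0n; lia.
have K0 : 0 < K by rewrite /K ltr0n; lia.
have lam0 : 0 < lam.
  rewrite /lam; apply: divr_gt0 => //; apply: mulr_gt0 => //.
  by rewrite ltr0n bin_gt0.
have hl : 2 * K * lam <= E * N ^+ 2.
  have e : 2 * K * lam = E * (2 * 'C(n, 2))%:R.
    rewrite /lam natrM -/K; field; exact: lt0r_neq0.
  rewrite e; apply: ler_wpM2l; first exact: ltW.
  by rewrite /N -natrX ler_nat (_ : (n ^ 2 = n * n)%N) ?bin2_le // expnS expn1.
case/orP: (le_total (K ^+ 2) (N ^+ 2 * F)) => [hA|hB].
  have := @boundA R k.-1 lam F lam0 F0; rewrite prednK // => H.
  apply: le_trans H _; rewrite lee_fin -/N -/K.
  exact: arithA.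
have H1 : 0 <= C by [].
move: (@lowB R N K F F0 K0 N0 hB) (@lowC R N K F F0 K0 N0 hB) => LB LC.
have [k12|k3] := leqP k 2.
  have hK2 : K <= 2 by rewrite /K (_ : (2 : R) = (2%N)%:R) // ler_nat.
  have H : (gamma_expect k lam (fun z => (1 / (F + z) ^+ 2)%R) <= (lam / F)%:E)%E.
    have : (k == 1)%N || (k == 2)%N by move: k1 k12; case: (k) => [|[|[|]]].
    by case/orP => /eqP ->; [exact: boundC1 | exact: boundC2].
  apply: le_trans H _; rewrite lee_fin -/N -/K.
  apply: le_trans (@arithC R C E N K lam F K0 hK2 N0 lam0 F0 hl C4 (ltW E0)) _.
  exact: ler_wpM2l.
have [m km] : exists m, k = m.+3 by exists (k - 3)%N; rewrite -addn3 subnK.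
have := @boundB R m lam F lam0 F0; rewrite -km => H.
apply: le_trans H _; rewrite lee_fin -/N -/K.
have Q0 : 0 < (m.+2)%:R * (m.+1)%:R :> R by apply: mulr_gt0; rewrite ltr0n.
have hQ : K ^+ 2 <= 6 * ((m.+2)%:R * (m.+1)%:R).
  by rewrite /K km -natrX -!natrM ler_nat; apply: sq_le.
apply: le_trans (@arithB R C E N K lam _ K0 N0 lam0 Q0 hQ hl C3 (ltW E0)) _.
exact: ler_wpM2l.
Qed.
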